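(* Let $m,k\ge 1$ and let $\Delta\in\mathbb{R}^{m\times k}$ be a matrix such that (a) each row of $\Delta$ has at most one nonzero entry, and (b) for every column index $i\in\{1,\dots,k\}$ there exists a row $a$ with $\Delta_{a,i}\neq 0$. Let $\mathbf{L}\in\mathbb{R}^{k\times k}$ be invertible and set $\hat\Delta:=\Delta\mathbf{L}$. If $\|\hat\Delta\|_0\le\|\Delta\|_0$, then $\mathbf{L}$ is a permutation-scaling matrix, i.e. $\mathbf{L}=\mathbf{P}\mathbf{D}$ for a permutation matrix $\mathbf{P}$ and an invertible diagonal matrix $\mathbf{D}$.
   Context: $\|M\|_0$ denotes the number of nonzero entries of a matrix $M$. In the paper, the rows of $\Delta$ are the parameter-change vectors $\delta_a$ indexed by the arcs $a$ of a tree of environments (so $m=|\mathcal{A}|$), and $k$ is the latent dimension. *)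

(* Defs.v *)
From HB Require Import structures.
From mathcomp Require Import all_boot all_order all_algebra.
From mathcomp Require Import perm.
From mathcomp Require Import reals.
Set Implicit Arguments. Unset Strict Implicit. Unset Printing Implicit Defensive.
Import Order.TTheory GRing.Theory Num.Theory.
Local Open Scope ring_scope.

Definition nnz (R : ringType) (m n : nat) (M : 'M[R]_(m, n)) : nat :=
  #|[set ij : 'I_m * 'I_n | M ij.1 ij.2 != 0]|.

Definition perm_scaling (R : ringType) (k : nat) (L : 'M[R]_k) : Prop :=
  exists (s : 'S_k) (d : 'rV[R]_k),
    (forall i, d 0 i != 0) /\ L = perm_mx s *m diag_mx d.

(* Main.v *)
Require Import Defs.
From HB Require Import structures.
From mathcomp Require Import all_boot all_order all_algebra.
From mathcomp Require Import perm.
From mathcomp Require Import reals.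
Import Order.TTheory GRing.Theory Num.Theory.
Local Open Scope ring_scope.

Lemma unit_row_nz (F : fieldType) k (L : 'M[F]_k) (HL : L \in unitmx) i :
  exists j, L i j != 0.
Proof.
apply/existsP; apply: contraT; rewrite negb_exists => /forallP H.
have := mulmxV HL; move/matrixP/(_ i i); rewrite !mxE eqxx /=.
rewrite big1; first by move/eqP; rewrite eq_sym oner_eq0.
move=> l _.
by move: (H l); rewrite negbK => /eqP ->; rewrite mul0r.
Qed.

Lemma unit_col_nz (F : fieldType) k (L : 'M[F]_k) (HL : L \in unitmx) j :
  exists i, L i j != 0.
Proof.
apply/existsP; apply: contraT; rewrite negb_exists => /forallP H.
have := mulVmx HL; move/matrixP/(_ j j); rewrite !mxE eqxx /=.
rewrite big1; first by move/eqP; rewrite eq_sym oner_eq0.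
move=> l _.
by move: (H l); rewrite negbK => /eqP ->; rewrite mulr0.
Qed.

Theorem proposition4p7 (R : realType) (m k : nat) (Hm : (1 <= m)%N) (Hk : (1 <= k)%N)
  (Delta : 'M[R]_(m, k)) (L : 'M[R]_k)
  (Ha : forall a : 'I_m, (#|[set i : 'I_k | Delta a i != 0%R]| <= 1)%N)
  (Hb : forall i : 'I_k, exists a : 'I_m, Delta a i != 0)
  (HL : L \in unitmx)
  (Hnnz : (nnz (Delta *m L) <= nnz Delta)%N) :
  perm_scaling L.
Proof.
have Hone : forall a c l, Delta a c != 0 -> l != c -> Delta a l = 0.
  move=> a c l Hc Hlc; apply/eqP; apply: contraT => Hl.
  suff : (1 < #|[set i : 'I_k | Delta a i != 0%R]|)%N by rewrite ltnNge Ha.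
  have <- : #|[set c; l]| = 2%N by rewrite cards2 eq_sym Hlc.
  apply: subset_leq_card; apply/subsetP => x; rewrite !inE.
  by case/orP => /eqP ->.
have Hprod : forall a c j, Delta a c != 0 -> (Delta *m L) a j = Delta a c * L c j.
  move=> a c j Hc; rewrite mxE (bigD1 c) //= big1 ?addr0 // => l Hl.
  by rewrite (Hone a c l Hc Hl) mul0r.
have [g Hg] := fin_all_exists (@unit_row_nz _ _ _ HL).
have Huniq : forall i j, L i j != 0 -> j = g i.
  move=> i0 j Hj; apply/eqP; apply: contraT => Hjg.
  have [a0 Ha0] := Hb i0.
  pose A := [set ij : 'I_m * 'I_k | Delta ij.1 ij.2 != 0].
  pose B := [set ij : 'I_m * 'I_k | (Delta *m L) ij.1 ij.2 != 0].
  pose f := fun ij : 'I_m * 'I_k => (ij.1, g ij.2).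
  have finj : {in A &, injective f}.
    move=> [a c] [a' c']; rewrite !inE /f /= => H1 H2 [ea _]; subst a'.
    apply/eqP; rewrite xpair_eqE eqxx /=; apply: contraT => Hcc.
    by move: H2; rewrite (Hone a c c' H1) ?eqxx // eq_sym.
  have Hprop : f @: A \proper B.
    apply/properP; split.
      apply/subsetP => x /imsetP [[a c] Hac ->]; move: Hac; rewrite !inE /= => Hac.
      by rewrite (Hprod a c _ Hac) mulf_neq0 // Hg.
    exists (a0, j); first by rewrite inE /= (Hprod a0 i0 _ Ha0) mulf_neq0.
    apply/imsetP => [[[a c] Hac [ea ej]]]; subst a.
    move: Hac; rewrite inE /= => Hac.
    have ec : c = i0 by apply/eqP; apply: contraT => Hc; move: Hac; rewrite (Hone a0 i0 c Ha0 Hc) eqxx.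
    by subst c; move: Hjg; rewrite ej eqxx.
  have := proper_card Hprop; rewrite card_in_imset // => H.
  by move: Hnnz; rewrite /nnz -/A -/B leqNgt H.
have gsurj : forall j, exists i, g i = j.
  move=> j; have [i Hi] := @unit_col_nz _ _ _ HL j; exists i; by rewrite -(Huniq i j Hi).
have ginj : injective g.
  have [h Hh] := fin_all_exists gsurj.
  have hinj : injective h by apply: (can_inj Hh).
  move=> i i'.
  have /codomP [x ->] := injF_onto hinj i.
  have /codomP [x' ->] := injF_onto hinj i'.
  by rewrite !Hh => ->.
exists (perm ginj), (\row_j L (((perm ginj)^-1)%g j) j); split.
  by move=> j; rewrite mxE -{2}(permKV (perm ginj) j) permE Hg.
apply/matrixP => i j; rewrite mul_mx_diag !mxE.
case: (eqVneq (perm ginj i) j) => [<-|Hne].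
  by rewrite permK mul1r.
rewrite mul0r; apply/eqP; apply: contraT => Hij.
by move: Hne; rewrite permE -(Huniq i j Hij) eqxx.
Qed.
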